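(* Let $f$ be a non-trivial constraint and let $P$ be a multilinear polynomial over $\mathbb{Q}$ in $\ell$ variables of degree $d$ with $0\le d\le\deg(f)$. Then there exist $M$, constraints $f_1,\dots,f_M$ each expressible by $f$ with constants, index tuples $(j_i^1,\dots,j_i^{\mathrm{ar}(f_i)})$ with entries in $[\ell]$, and rationals $\alpha_1,\dots,\alpha_M\in\mathbb{Q}$ such that the polynomial identity $$P(x_1,\dots,x_\ell)=\sum_{i=1}^M\alpha_i\cdot P_{f_i}(x_{j_i^1},\dots,x_{j_i^{\mathrm{ar}(f_i)}})$$ holds.
   Context: A $k$-ary constraint is $f\colon\{0,1\}^k\to\{0,1\}$ ($k=\mathrm{ar}(f)$), trivial if it is constant. Its characteristic polynomial $P_f$ is the unique multilinear polynomial over $\mathbb{R}$ in $k$ variables with $P_f(x)=f(x)$ for all $x\in\{0,1\}^k$; $\deg(f)=\deg(P_f)$. A $d$-ary constraint $g$ is expressible by $f$ with constants if $g(x_1,\dots,x_d)=f(\xi_1,\dots,\xi_k)$ identically, where each $\xi_j$ is either a variable $x_i$ for some $i\in[d]$ or one of the constants $0,1$. *)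

(* Defs.v *)
From HB Require Import structures.
From mathcomp Require Import all_boot all_order all_algebra.
From mathcomp Require Import finmap mpoly.
Set Implicit Arguments. Unset Strict Implicit. Unset Printing Implicit Defensive.
Import Order.TTheory GRing.Theory Num.Theory.
Local Open Scope ring_scope.

Record constraint := Constraint {
  ar : nat;
  cfun : {ffun (bool ^ ar) -> bool} }.

Definition trivial_constraint (f : constraint) : Prop :=
  exists b : bool, forall x, cfun f x = b.

Definition multilinear (n : nat) (p : {mpoly rat[n]}) : Prop :=
  forall m, m \in msupp p -> forall i : 'I_n, (m i <= 1)%N.

(* Total degree (degree of the zero polynomial is taken to be 0). *)
Definition mpdeg (n : nat) (p : {mpoly rat[n]}) : nat := (msize p).-1.

Definition charpoly (f : constraint) : {mpoly rat[ar f]} :=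
  \sum_(a : bool ^ ar f)
     (cfun f a)%:R *: \prod_(i < ar f) (if a i then 'X_i else 1 - 'X_i).

Definition cdeg (f : constraint) : nat := mpdeg (charpoly f).

Definition expressible (f g : constraint) : Prop :=
  exists xi : 'I_(ar f) -> 'I_(ar g) + bool,
    forall x : bool ^ ar g,
      cfun g x = cfun f [ffun j => match xi j with inl i => x i | inr b => b end].

Definition subst_vars (l : nat) (g : constraint) (j : 'I_(ar g) -> 'I_l)
    : {mpoly rat[l]} :=
  comp_mpoly [tuple 'X_(j t) | t < ar g] (charpoly g).

(* Main.v *)
Require Import Defs.
From HB Require Import structures.
From mathcomp Require Import all_boot all_order all_algebra.
From mathcomp Require Import finmap mpoly.
From mathcomp Require Import lra.
Set Implicit Arguments. Unset Strict Implicit. Unset Printing Implicit Defensive.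
Import Order.TTheory GRing.Theory Num.Theory.
Local Open Scope ring_scope.

Section Aux.
Variable n : nat.
Definition Bm (a : bool ^ n) : {mpoly rat[n]} :=
  \prod_(i < n) (if a i then 'X_i else 1 - 'X_i).
Definition interp (h : bool ^ n -> rat) : {mpoly rat[n]} := \sum_a h a *: Bm a.
Definition leb (S a : bool ^ n) : bool := [forall i, S i ==> a i].
Definition mS (S : bool ^ n) : 'X_{1..n} := [multinom (nat_of_bool (S i)) | i < n].
Definition card1 (S : bool ^ n) : nat := (\sum_i nat_of_bool (S i))%N.

Lemma XmS S : 'X_[mS S] = \prod_(i < n) (if S i then 'X_i else 1) :> {mpoly rat[n]}.
Proof. rewrite mpolyXE_id; apply: eq_bigr => i _; rewrite mnmE; by case: (S i). Qed.

Lemma interp_chi S : interp (fun a => (leb S a)%:R) = 'X_[mS S].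
Proof.
rewrite XmS.
pose F := fun (i : 'I_n) (b : bool) =>
  if b then ('X_i : {mpoly rat[n]}) else if S i then 0 else 1 - 'X_i.
transitivity (\prod_(i < n) \sum_(b : bool) F i b); last first.
  apply: eq_bigr => i _; rewrite big_bool /F /=; case: (S i); rewrite ?addr0 //.
  by rewrite addrC subrK.
rewrite bigA_distr_bigA /interp; apply: eq_bigr => a _.
case: (boolP (leb S a)) => [/forallP H | /forallPn [i Hi]].
  rewrite scale1r /Bm; apply: eq_bigr => i _; rewrite /F.
  by case: (a i) (H i) => //=; case: (S i).
rewrite scale0r (bigD1 i) //= /F.
rewrite negb_imply in Hi; case/andP: Hi => -> /negbTE ->; by rewrite mul0r.
Qed.

Lemma interp_lin (K : finType) (c : K -> rat) (h : K -> bool ^ n -> rat) :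
  \sum_k c k *: interp (h k) = interp (fun x => \sum_k c k * h k x).
Proof.
rewrite /interp; under eq_bigr do rewrite scaler_sumr.
rewrite exchange_big /=; apply: eq_bigr => a _.
rewrite scaler_suml; apply: eq_bigr => k _; by rewrite scalerA.
Qed.

Lemma interp_scale (k : rat) (h : bool ^ n -> rat) :
  interp (fun x => k * h x) = k *: interp h.
Proof.
rewrite /interp scaler_sumr; apply: eq_bigr => a _; by rewrite scalerA.
Qed.

Definition tog (z : 'I_n) (C : bool ^ n) : bool ^ n :=
  [ffun i => if i == z then ~~ C i else C i].

Lemma togK z : involutive (tog z).
Proof.
move=> C; apply/ffunP => i; rewrite !ffunE; case: (i == z) => //; exact: negbK.
Qed.

Lemma prod_tog (g : 'I_n -> bool -> rat) (u : bool ^ n) z :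
  g z (~~ u z) = - g z (u z) ->
  \prod_i g i (tog z u i) = - \prod_i g i (u i).
Proof.
move=> H; rewrite (bigD1 z) //= [in RHS](bigD1 z) //= ffunE eqxx H mulNr.
congr (- (_ * _)); apply: eq_bigr => i /negbTE Hi; by rewrite ffunE Hi.
Qed.

End Aux.

Lemma sum_invol (K : finType) (phi : K -> K) (F : K -> rat) :
  involutive phi -> (forall x, F (phi x) = - F x) -> \sum_x F x = 0.
Proof.
move=> Hphi HF.
have E : \sum_x F x = \sum_x F (phi x) := reindex_inj (inv_inj Hphi).
move: E; under [in X in _ = X]eq_bigr do rewrite HF.
rewrite sumrN => E; lra.
Qed.
Section Mob.
Variable n : nat.
Implicit Types (A B C T a : bool ^ n) (z : 'I_n) (h : bool ^ n -> rat).
Definition sgn (T C : bool ^ n) : rat := \prod_i (if T i && ~~ C i then -1 else 1).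
Definition mu (h : bool ^ n -> rat) (T : bool ^ n) : rat :=
  \sum_C (leb C T)%:R * sgn T C * h C.

Lemma leb_refl C : leb C C.
Proof. by apply/forallP => i; apply/implyP. Qed.

Lemma leb_trans A B C : leb A B -> leb B C -> leb A C.
Proof.
move=> /forallP H1 /forallP H2; apply/forallP => i; apply/implyP.
by move=> /(implyP (H1 i)) /(implyP (H2 i)).
Qed.

Lemma leb_anti A B : leb A B -> leb B A -> A = B.
Proof.
move=> /forallP H1 /forallP H2; apply/ffunP => i.
by move: (H1 i) (H2 i); case: (A i); case: (B i).
Qed.

Lemma leb_togl z C T : T z -> leb (tog z C) T = leb C T.
Proof.
move=> Tz; apply: eq_forallb => i; rewrite ffunE; case: eqP => [->|//].
by rewrite Tz !implybT.
Qed.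

Lemma leb_togr z C T : ~~ C z -> leb C (tog z T) = leb C T.
Proof.
move=> Cz; apply: eq_forallb => i; rewrite ffunE; case: eqP => [->|//].
by rewrite (negbTE Cz).
Qed.

Lemma sgn_refl C : sgn C C = 1.
Proof. by apply: big1 => i _; rewrite andbN. Qed.

Lemma sgn_togl z T C : ~~ C z -> sgn (tog z T) C = - sgn T C.
Proof.
move=> Cz; rewrite /sgn.
apply: (prod_tog (g := fun i b => if b && ~~ C i then -1 else 1)).
by rewrite Cz !andbT; case: (T z) => //=; rewrite opprK.
Qed.

Lemma sgn_togr z T C : T z -> sgn T (tog z C) = - sgn T C.
Proof.
move=> Tz; rewrite /sgn.
apply: (prod_tog (g := fun i b => if T i && ~~ b then -1 else 1)).
by rewrite Tz /=; case: (C z) => //=; rewrite opprK.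
Qed.

Lemma leb_neq C a : leb C a -> C != a -> exists z, a z && ~~ C z.
Proof.
move=> H Hne; apply/existsP; apply: contraNT Hne => /existsPn H2.
apply/eqP; apply: leb_anti => //; apply/forallP => i; move: (H2 i).
by case: (a i); case: (C i).
Qed.

Lemma mobius h a : h a = \sum_T (leb T a)%:R * mu h T.
Proof.
rewrite /mu; under eq_bigr do rewrite mulr_sumr.
rewrite exchange_big /= (bigD1 a) //= [X in _ + X]big1 ?addr0.
  rewrite (bigD1 a) //= leb_refl sgn_refl !mul1r big1 ?addr0 //.
  move=> T HT; case: (boolP (leb T a)) => H1; last by rewrite mul0r.
  case: (boolP (leb a T)) => H2; last by rewrite !(mul0r, mulr0).
  by rewrite (leb_anti H1 H2) eqxx in HT.
move=> C HC; case: (boolP (leb C a)) => Hca; last first.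
  apply: big1 => T _; case: (boolP (leb T a)) => H1; last by rewrite mul0r.
  case: (boolP (leb C T)) => H2; last by rewrite !(mul0r, mulr0).
  by rewrite (leb_trans H2 H1) in Hca.
have [z /andP [az Cz]] := leb_neq Hca HC.
apply: (sum_invol (togK z)) => T.
rewrite leb_togl // leb_togr // sgn_togl //.
by rewrite mulrN mulNr mulrN.
Qed.

Lemma interp_expand h : interp h = \sum_T mu h T *: 'X_[mS T].
Proof.
under [RHS]eq_bigr do rewrite -interp_chi.
rewrite (interp_lin (mu h) (fun T a => (leb T a)%:R)); rewrite /interp; apply: eq_bigr => a _; congr (_ *: _).
rewrite [LHS]mobius; apply: eq_bigr => T _; by rewrite mulrC.
Qed.

Lemma mS_inj : injective (@mS n).
Proof.
move=> A B /mnmP H; apply/ffunP => i; move: (H i); rewrite !mnmE.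
by case: (A i); case: (B i).
Qed.

Lemma mdeg_mS T : mdeg (mS T) = card1 T.
Proof. by rewrite mdegE; apply: eq_bigr => i _; rewrite mnmE. Qed.

Lemma coef_interp h T : (interp h)@_(mS T) = mu h T.
Proof.
rewrite interp_expand raddf_sum /= (bigD1 T) //= mcoeffZ mcoeffX eqxx mulr1.
rewrite big1 ?addr0 // => T' HT'; rewrite mcoeffZ mcoeffX.
case: eqP => [/mS_inj E|]; last by rewrite mulr0.
by rewrite E eqxx in HT'.
Qed.

Lemma supp_interp h m : m \in msupp (interp h) -> exists T, m = mS T /\ mu h T != 0.
Proof.
move=> Hm.
have: (interp h)@_m != 0 by rewrite mcoeff_eq0 negbK.
rewrite interp_expand raddf_sum /=.
case: (boolP [exists T, (mS T == m) && (mu h T != 0)]).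
  by move=> /existsP [T /andP [/eqP E H]] _; exists T.
move=> /existsPn H; rewrite big1 ?eqxx // => T _; rewrite mcoeffZ mcoeffX.
move: (H T); case: eqP => [_ /=|]; last by rewrite mulr0.
by rewrite negbK => /eqP ->; rewrite mul0r.
Qed.
End Mob.
Record item (l : nat) := Item { ig : constraint; ij : 'I_(ar ig) -> 'I_l; ia : rat }.
Arguments ig {l} i.
Arguments ij {l} i _.
Arguments ia {l} i.

Definition inSpan (f : constraint) (l : nat) (Q : {mpoly rat[l]}) :=
  exists s : seq (item l), (forall it, List.In it s -> expressible f (ig it)) /\
    Q = \sum_(it <- s) ia it *: subst_vars (ij it).

Section Span.
Variables (f : constraint) (l : nat).

Lemma span0 : inSpan f (0 : {mpoly rat[l]}).
Proof. by exists [::]; split => //; rewrite big_nil. Qed.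

Lemma spanD (p q : {mpoly rat[l]}) : inSpan f p -> inSpan f q -> inSpan f (p + q).
Proof.
move=> [s1 [H1 E1]] [s2 [H2 E2]]; exists (s1 ++ s2); split.
  move=> it Hit; case: (List.in_app_or _ _ _ Hit) => ?; [exact: H1 | exact: H2].
by rewrite big_cat E1 E2.
Qed.

Lemma spanZ c (p : {mpoly rat[l]}) : inSpan f p -> inSpan f (c *: p).
Proof.
move=> [s [H E]]; exists [seq @Item l (ig it) (ij it) (c * ia it) | it <- s]; split.
  move=> it /List.in_map_iff [it' [<- Hit']] /=; exact: H.
rewrite big_map E scaler_sumr; apply: eq_bigr => it _ /=; by rewrite scalerA.
Qed.

Lemma span1 g (j : 'I_(ar g) -> 'I_l) : expressible f g -> inSpan f (subst_vars j).
Proof.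
move=> H; exists [:: @Item l g j 1]; split.
  by move=> it [<-|[]].
by rewrite big_seq1 scale1r.
Qed.

Lemma span_big (I : Type) (r : seq I) (P : pred I) (F : I -> {mpoly rat[l]}) :
  (forall i, P i -> inSpan f (F i)) -> inSpan f (\sum_(i <- r | P i) F i).
Proof.
move=> H; elim: r => [|x r IH]; first by rewrite big_nil; exact: span0.
rewrite big_cons; case: (boolP (P x)) => Px //; exact: spanD (H x Px) IH.
Qed.
End Span.

Lemma card1E n (S : bool ^ n) : card1 S = #|[set j | S j]|.
Proof.
rewrite /card1 -sum1_card [RHS]big_mkcond /=; apply: eq_bigr => i _; rewrite inE.
by case: (S i).
Qed.

Lemma tau_ex l N (S : bool ^ l) (T : bool ^ N) : (card1 S <= card1 T)%N ->
  exists tau : 'I_N -> 'I_l + bool,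
    (forall t, match tau t with inl j => S j | inr b => b end) /\
    (forall j, S j -> exists t, T t /\ tau t = inl j).
Proof.
move=> Hle.
case: (pickP (fun j => S j)) => [j0 Sj0' | none]; last first.
  exists (fun _ => inr true); split => // j Sj.
  by move: (none j); rewrite Sj.
rewrite !card1E in Hle.
have Sj0 : j0 \in [set j | S j] by rewrite inE.
pose sigma j := enum_val (A := [set t | T t]) (widen_ord Hle (enum_rank_in Sj0 j)).
exists (fun t => if [pick j in [set j | S j] | sigma j == t] is Some j then inl j else inr true).
split.
  by move=> t; case: pickP => [j /andP [] |//]; rewrite inE.
move=> j Sj; exists (sigma j); split.
  by have := enum_valP (widen_ord Hle (enum_rank_in Sj0 j)); rewrite inE.
case: pickP => [j' /andP [Aj' /eqP E] | H]; last first.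
  by move: (H j); rewrite inE Sj eqxx.
congr inl.
move: E => /enum_val_inj /(congr1 val) /= /ord_inj E.
have Aj : j \in [set j | S j] by rewrite inE.
by rewrite -(enum_rankK_in Sj0 Aj') E (enum_rankK_in Sj0 Aj).
Qed.
Lemma interp_ext n (h1 h2 : bool ^ n -> rat) : h1 =1 h2 -> interp h1 = interp h2.
Proof. by move=> H; apply: eq_bigr => a _; rewrite H. Qed.

Section Core.
Variables (f : constraint) (l : nat).
Let F := fun a : bool ^ (ar f) => ((cfun f a)%:R : rat).

Lemma core (T : bool ^ (ar f)) (S : bool ^ l) :
  mu F T != 0 -> (card1 S <= card1 T)%N -> inSpan f ('X_[mS S] : {mpoly rat[l]}).
Proof.
move=> Hmu Hle.
have [tau [H1 H2]] := tau_ex Hle.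
pose xi (C : bool ^ (ar f)) t : 'I_l + bool := if C t then tau t else inr false.
pose p (C : bool ^ (ar f)) (x : bool ^ l) : bool ^ (ar f) :=
  [ffun t => match xi C t with inl i => x i | inr b => b end].
pose gC (C : bool ^ (ar f)) := @Constraint l [ffun x => cfun f (p C x)].
have Hsub : forall C, subst_vars (fun i : 'I_(ar (gC C)) => (i : 'I_l)) = interp (fun x => F (p C x)).
  move=> C; transitivity (charpoly (gC C)); first exact: comp_mpoly_id.
  by apply: eq_bigr => x _; rewrite /F ffunE.
have Hpt : forall x, \sum_C (leb C T)%:R * sgn T C * F (p C x) = mu F T * (leb S x)%:R.
  move=> x; case: (boolP (leb S x)) => HS.
    have Hev : forall t, T t -> match tau t with inl j => x j | inr b => b end.
      move=> t Tt; move: (H1 t); case: (tau t) => [j Sj|//].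
      by move/forallP: HS => /(_ j) /implyP; apply.
    rewrite mulr1 /mu; apply: eq_bigr => C _.
    case: (boolP (leb C T)) => HC; last by rewrite !mul0r.
    congr (_ * F _); apply/ffunP => t; rewrite ffunE /xi.
    case: (boolP (C t)) => Ct //.
    have Tt : T t by move/forallP: HC => /(_ t) /implyP; apply.
    by move: (Hev t Tt); case: (tau t).
  rewrite mulr0.
  move/forallPn: HS => [j]; rewrite negb_imply => /andP [Sj /negbTE xj].
  have [z [Tz Ez]] := H2 j Sj.
  apply: (sum_invol (togK z)) => C.
  rewrite leb_togl // sgn_togr //.
  have -> : p (tog z C) x = p C x.
    apply/ffunP => t; rewrite !ffunE /xi ffunE.
    case: eqP => [->|//]; rewrite Ez.
    by case: (C z) => /=.
  by rewrite mulrN mulNr.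
have -> : 'X_[mS S] = \sum_C ((mu F T)^-1 * ((leb C T)%:R * sgn T C)) *:
      subst_vars (fun i : 'I_(ar (gC C)) => (i : 'I_l)).
  under eq_bigr do rewrite Hsub.
  rewrite interp_lin -interp_chi; apply: interp_ext => x.
  rewrite /=.
  under eq_bigr do rewrite -mulrA mulrA.
  rewrite -(mulKf Hmu ((leb S x)%:R)) -Hpt mulr_sumr; apply: eq_bigr => C _.
  by rewrite !mulrA.
apply: (@span_big f l _ _ xpredT) => C _; apply: spanZ; apply: span1.
exists (xi C) => x; by rewrite ffunE.
Qed.
End Core.
Lemma In_nth (T : Type) (d : T) (s : seq T) i : (i < size s)%N -> List.In (nth d s i) s.
Proof.
elim: s i => [|x s IH] [|i] //= H; [left | right; exact: IH] => //.
Qed.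

Definition j0 (l : nat) : 'I_0 -> 'I_l.
Proof. by case=> m Hm; exfalso; rewrite ltn0 in Hm. Defined.

Unset Implicit Arguments.

Theorem lemma15 (f : constraint) (l d : nat) (P : {mpoly rat[l]}) :
  ~ trivial_constraint f ->
  multilinear P -> mpdeg P = d -> (d <= cdeg f)%N ->
  exists (M : nat) (fs : 'I_M -> constraint)
         (js : forall i : 'I_M, 'I_(ar (fs i)) -> 'I_l) (alpha : 'I_M -> rat),
    (forall i, expressible f (fs i)) /\
    P = \sum_(i < M) alpha i *: subst_vars (js i).
Proof.
move=> Hnt Hml HdP Hd.
pose F := fun a : bool ^ (ar f) => ((cfun f a)%:R : rat).
have Hcp : charpoly f = interp F by [].
have [T [HdT HmuT]] : exists T, (d <= card1 T)%N /\ mu F T != 0.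
  case: (eqVneq (charpoly f) 0) => Hc0.
    exfalso; apply: Hnt; exists false => a.
    have : F a = 0.
      rewrite (mobius F a) big1 // => T _.
      by rewrite -coef_interp -Hcp Hc0 mcoeff0 mulr0.
    by rewrite /F; case: (cfun f a) => //= /eqP; rewrite oner_eq0.
  have [m Hm Hdm] : exists2 m, m \in msupp (charpoly f) & (d <= mdeg m)%N.
    case: (boolP (has (fun m => d <= mdeg m)%N (msupp (charpoly f)))).
      by move=> /hasP [m Hm Hdm]; exists m.
    move=> /hasPn H; exfalso.
    have Hs : (msize (charpoly f) <= d)%N.
      rewrite msizeE; apply/bigmax_leqP_seq => m Hm _.
      by rewrite ltnNge; apply: H.
    have Hs0 : msize (charpoly f) != 0%N by rewrite msize_poly_eq0.
    move: Hd; rewrite /cdeg /mpdeg => Hd.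
    move: Hs0 Hs Hd; case: (msize (charpoly f)) => [|k] //= _ H1 H2.
    by move: (leq_trans H1 H2); rewrite ltnn.
  rewrite Hcp in Hm; have [T [ET HT]] := supp_interp Hm.
  by exists T; split => //; rewrite -mdeg_mS -ET.
have HP : inSpan f P.
  rewrite {1}(mpolyE P) big_seq.
  apply: (@span_big f l _ _ (fun m => m \in msupp P)) => m Hm; apply: spanZ.
  pose S := [ffun i => m i == 1%N] : bool ^ l.
  have ES : mS S = m.
    apply/mnmP => i; rewrite mnmE ffunE.
    by have := Hml m Hm i; case: (m i) => [|[|k]].
  rewrite -ES; apply: (core HmuT).
  rewrite -mdeg_mS ES; apply: leq_trans HdT.
  have := msize_mdeg_lt Hm; rewrite /mpdeg in HdP; rewrite -HdP.
  by case: (msize P).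
have [s [Hs Es]] := HP.
pose d0 := @Item l (@Constraint 0 [ffun _ => false]) (j0 l) 0.
exists (size s), (fun i => ig (nth d0 s i)), (fun i => ij (nth d0 s i)),
  (fun i => ia (nth d0 s i)); split.
  by move=> i; apply: Hs; apply: In_nth.
by rewrite Es (big_nth d0) big_mkord.
Qed.
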